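(* There exists a feasible collaborative learning problem in the general PAC learning setting that has no stable equilibrium.
   Context: A collaborative learning problem has $k$ agents, a strategy space $\Theta\subseteq\mathbb{R}_+^k$, utility functions $u_i:\Theta\to\mathbb{R}$ and thresholds $\mu_i$; ${\boldsymbol\theta}$ is feasible if $u_i({\boldsymbol\theta})\ge\mu_i$ for all $i$, and the problem is feasible if some feasible ${\boldsymbol\theta}\in\Theta$ exists. A feasible ${\boldsymbol\theta}$ is a stable equilibrium if for no $i$ is there $\theta_i'<\theta_i$ with $(\theta_i',{\boldsymbol\theta}_{-i})\in\Theta$ and $u_i(\theta_i',{\boldsymbol\theta}_{-i})\ge\mu_i$ (where $(x,{\boldsymbol\theta}_{-i})$ replaces the $i$-th entry by $x$). In the general PAC learning setting, each agent $i$ has a distribution $\mathcal{D}_i$ over labeled examples $\mathcal{X}\times\mathcal{Y}$, agent $j$ draws $\theta_j$ (an integer) i.i.d. samples $S_j\sim\mathcal{D}_j^{\theta_j}$, a classifier $h_S$ is learned from the pooled sample $S=\cup_jS_j$, and $u_i({\boldsymbol\theta})=1-\mathbb{E}_{\{S_j\}}[\mathrm{err}_{\mathcal{D}_i}(h_S)]$ is agent $i$'s expected accuracy (in the construction, the distributions may themselves be random and $h_S$ is the optimal classifier given the observed samples). *)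

(* Defs.v *)
From HB Require Import structures.
From mathcomp Require Import all_boot all_order all_algebra.
From mathcomp Require Import reals.
Set Implicit Arguments. Unset Strict Implicit. Unset Printing Implicit Defensive.
Import Order.TTheory GRing.Theory Num.Theory.
Local Open Scope ring_scope.

(* Strategies are vectors theta : 'I_k -> nat (sample counts); the      *)
(* strategy space Theta is a predicate on such vectors.                 *)

Definition upd (k : nat) (th : 'I_k -> nat) (i : 'I_k) (x : nat) : 'I_k -> nat :=
  fun j => if j == i then x else th j.

Definition feasible_point (R : realType) (k : nat) (Theta : ('I_k -> nat) -> Prop)
    (u : 'I_k -> ('I_k -> nat) -> R) (mu : 'I_k -> R) (th : 'I_k -> nat) : Prop :=
  Theta th /\ forall i, mu i <= u i th.

Definition stable_equilibrium (R : realType) (k : nat) (Theta : ('I_k -> nat) -> Prop)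
    (u : 'I_k -> ('I_k -> nat) -> R) (mu : 'I_k -> R) (th : 'I_k -> nat) : Prop :=
  feasible_point Theta u mu th /\
  forall (i : 'I_k) (x : nat), (x < th i)%N -> Theta (upd th i x) ->
    ~ (mu i <= u i (upd th i x)).

(* General PAC learning setting (finite example / label / environment   *)
(* spaces).  The environment w : Omega is drawn from [prior]; given w,  *)
(* agent i's distribution over (X * Y)%type is D i w.                           *)

Definition is_pmf (R : realType) (T : finType) (p : T -> R) : Prop :=
  (forall t, 0 <= p t) /\ \sum_(t : T) p t = 1.

Definition sample_space (T : finType) (k : nat) (th : 'I_k -> nat) : finType :=
  {dffun forall j : 'I_k, (th j).-tuple T}.

Definition sample_prob (R : realType) (T : finType) (k : nat) (th : 'I_k -> nat)
    (D : 'I_k -> T -> R) (S : sample_space T th) : R :=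
  \prod_(j < k) \prod_(m < th j) D j (tnth (S j) m).

(* the pooled sample S = U_j S_j, as a multiset (count function) *)
Definition pooled (T : finType) (k : nat) (th : 'I_k -> nat)
    (S : sample_space T th) : {ffun T -> nat} :=
  [ffun z => \sum_(j < k) count_mem z (S j : seq T)].

Definition err (R : realType) (X Y : finType) (d : (X * Y)%type -> R) (g : X -> Y) : R :=
  \sum_(z : (X * Y)%type) d z * (g z.1 != z.2)%:R.

(* u_i(theta) = 1 - E[err_{D_i}(h_S)], expectation over the environment
   and over the samples; the learner h may depend on the (public)
   strategy vector theta and on the pooled sample. *)
Definition pac_utility (R : realType) (k : nat) (X Y Omega : finType)
    (prior : Omega -> R) (D : 'I_k -> Omega -> (X * Y)%type -> R)
    (h : ('I_k -> nat) -> {ffun (X * Y)%type -> nat} -> X -> Y)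
    (i : 'I_k) (th : 'I_k -> nat) : R :=
  1 - \sum_(w : Omega) prior w *
        \sum_(S : sample_space (X * Y)%type th)
          sample_prob (fun j => D j w) S * err (D i w) (h th (pooled S)).

(* joint (unnormalised posterior) expected error of g for agent i on the
   event that the observed pooled sample equals c *)
Definition joint_err (R : realType) (k : nat) (X Y Omega : finType)
    (prior : Omega -> R) (D : 'I_k -> Omega -> (X * Y)%type -> R)
    (th : 'I_k -> nat) (c : {ffun (X * Y)%type -> nat}) (i : 'I_k) (g : X -> Y) : R :=
  \sum_(w : Omega) prior w *
    \sum_(S : sample_space ((X * Y)%type) th | pooled S == c)
      sample_prob (fun j => D j w) S * err (D i w) g.

Definition bayes_optimal (R : realType) (k : nat) (X Y Omega : finType)
    (prior : Omega -> R) (D : 'I_k -> Omega -> (X * Y)%type -> R)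
    (h : ('I_k -> nat) -> {ffun (X * Y)%type -> nat} -> X -> Y) : Prop :=
  forall (th : 'I_k -> nat) (c : {ffun (X * Y)%type -> nat}) (i : 'I_k) (g : X -> Y),
    joint_err prior D th c i (h th c) <= joint_err prior D th c i g.

Definition pac_setting (R : realType) (k : nat) (X Y Omega : finType)
    (prior : Omega -> R) (D : 'I_k -> Omega -> (X * Y)%type -> R)
    (h : ('I_k -> nat) -> {ffun (X * Y)%type -> nat} -> X -> Y) : Prop :=
  [/\ is_pmf prior, (forall i w, is_pmf (D i w)) & bayes_optimal prior D h].

(* Main.v *)
Require Import Defs.
From HB Require Import structures.
From mathcomp Require Import all_boot all_order all_algebra.
From mathcomp Require Import reals.
From mathcomp Require Import ring lra.
Import Order.TTheory GRing.Theory Num.Theory.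
Local Open Scope ring_scope.

Definition X := (bool * bool * bool)%type.
Definition Z := (X * bool)%type.
Definition W := (bool * bool)%type.
Definition own (i : 'I_2) (w : W) := if val i == 1%N then w.2 else w.1.
Definition oth (i : 'I_2) (w : W) := if val i == 1%N then w.1 else w.2.
Definition pt (i : 'I_2) (w : W) (k : bool) : Z :=
  ((val i == 1%N, k, oth i w), if k then own i w else false).
Definition Dx (R : realType) (i : 'I_2) (w : W) (z : Z) : R :=
  (z == pt i w false)%:R / 2 + (z == pt i w true)%:R / 2.
Definition prior (R : realType) (w : W) : R := 4%:R^-1.
Definition Pc (R : realType) (th : 'I_2 -> nat) (c : {ffun Z -> nat}) (w : W) : R :=
  \sum_(S : sample_space Z th | pooled S == c) sample_prob (fun j => Dx R j w) S.
Definition Mx (R : realType) th c (i : 'I_2) (z : Z) : R :=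
  \sum_w prior R w * (Pc R th c w * Dx R i w z).
Definition owner (x : X) : 'I_2 := inord (x.1.1 : nat).
Definition hx (R : realType) th c (x : X) : bool :=
  Mx R th c (owner x) (x, false) < Mx R th c (owner x) (x, true).

Lemma term_le_sum (R : realType) (I : finType) (P : pred I) (F : I -> R) a :
  P a -> (forall i, P i -> 0 <= F i) -> F a <= \sum_(i | P i) F i.
Proof. by move=> Pa F0; rewrite (bigD1 a) //= lerDl sumr_ge0 // => i /andP[/F0]. Qed.

Lemma Dx_ge0 (R : realType) i w z : 0 <= Dx R i w z.
Proof. by rewrite /Dx addr_ge0 // divr_ge0. Qed.

Lemma sp_ge0 (R : realType) th w (S : sample_space Z th) :
  0 <= sample_prob (fun j => Dx R j w) S.
Proof. by rewrite /sample_prob prodr_ge0 // => j _; rewrite prodr_ge0 // => m _; apply: Dx_ge0. Qed.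

Lemma Pc_ge0 (R : realType) th c w : 0 <= Pc R th c w.
Proof. by rewrite /Pc sumr_ge0 // => S _; apply: sp_ge0. Qed.

Lemma prior_ge0 (R : realType) w : 0 <= prior R w.
Proof. by rewrite /prior invr_ge0 ler0n. Qed.

Lemma Mx_ge0 (R : realType) th c i z : 0 <= Mx R th c i z.
Proof. by rewrite /Mx sumr_ge0 // => w _; rewrite mulr_ge0 ?prior_ge0 // mulr_ge0 ?Pc_ge0 ?Dx_ge0. Qed.

Lemma joint_errE (R : realType) th c i (g : X -> bool) :
  joint_err (prior R) (Dx R) th c i g = \sum_z (g z.1 != z.2)%:R * Mx R th c i z.
Proof.
rewrite /joint_err /Mx /Pc /err.
under eq_bigr do rewrite big_distrr /=.
under [RHS]eq_bigr do rewrite big_distrr /=.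
rewrite [RHS]exchange_big /=; apply: eq_bigr => w _.
under eq_bigr do rewrite !big_distrr /=.
under [RHS]eq_bigr do rewrite big_distrl !big_distrr /=.
rewrite [RHS]exchange_big /=; apply: eq_bigr => S _; apply: eq_bigr => z _.

by ring.
Qed.

Lemma Dx_other (R : realType) i w (x : X) y :
  x.1.1 != (val i == 1%N) -> Dx R i w (x, y) = 0.
Proof.
move=> Hx; rewrite /Dx /pt.
have -> : ((x, y) == ((val i == 1%N, false, oth i w), false)) = false.
  by apply/negbTE; apply: contra Hx => /eqP[-> _] /=.
have -> : ((x, y) == ((val i == 1%N, true, oth i w), own i w)) = false.
  by apply/negbTE; apply: contra Hx => /eqP[-> _] /=.
by rewrite mul0r addr0.
Qed.

Lemma Mx_other (R : realType) th c i (x : X) y :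
  x.1.1 != (val i == 1%N) -> Mx R th c i (x, y) = 0.
Proof. by move=> Hx; rewrite /Mx big1 // => w _; rewrite Dx_other // !mulr0. Qed.

Lemma owner_eq (x : X) (i : 'I_2) : x.1.1 = (val i == 1%N) -> owner x = i.
Proof.
move=> Hx; apply/val_inj; rewrite /owner /= inordK; last by case: (x.1.1).
by rewrite Hx; case: i {Hx} => [[|[|]]].
Qed.

Lemma sumZ (R : realType) (f : Z -> R) : \sum_(z : Z) f z = \sum_(x : X) \sum_(y : bool) f (x, y).
Proof. by rewrite pair_big; apply: eq_bigr => -[]. Qed.

Lemma bayes (R : realType) : bayes_optimal (prior R) (Dx R) (fun th c => hx R th c).
Proof.
move=> th c i g; rewrite !joint_errE !sumZ; apply: ler_sum => x _; rewrite !big_bool /=.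
case: (eqVneq x.1.1 (val i == 1%N)) => Hx; last by rewrite !Mx_other // !mulr0 addr0.
rewrite /hx (owner_eq _ _ Hx).
case: (ltrP (Mx R th c i (x, false)) (Mx R th c i (x, true))) => H; case: (g x) => /=; lra.
Qed.

Lemma sum_ind (R : realType) (p : Z) : \sum_(z : Z) ((z == p)%:R : R) = 1.
Proof. by rewrite (bigD1 p) //= eqxx big1 ?addr0 // => z /negbTE ->. Qed.

Lemma pmf_prior (R : realType) : is_pmf (prior R).
Proof.
split; first by move=> w; apply: prior_ge0.
rewrite /prior sumr_const card_prod card_bool -mulr_natr; lra.
Qed.

Lemma pmf_D (R : realType) i w : is_pmf (Dx R i w).
Proof.
split; first by move=> z; apply: Dx_ge0.
rewrite /Dx big_split /= -!big_distrl /= !sum_ind; lra.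
Qed.

Lemma setting (R : realType) : pac_setting (prior R) (Dx R) (fun th c => hx R th c).
Proof. by split; [apply: pmf_prior | apply: pmf_D | apply: bayes]. Qed.

Lemma ord2_eq (j j' : 'I_2) : (val j == 1%N) = (val j' == 1%N) -> j = j'.
Proof.
move=> H; apply/val_inj; move: H.
by case: j j' => [[|[|n]]] Hj [[|[|n']]] Hj' //=.
Qed.

Lemma oth_own (i j : 'I_2) w : j != i -> oth j w = own i w.
Proof.
rewrite /oth /own; case: i j => [[|[|n]]] Hi [[|[|n']]] Hj //=.
Qed.

Lemma pt_inj j w k j' w' k' : pt j w k = pt j' w' k' -> j = j' /\ oth j w = oth j' w'.
Proof. by case=> /ord2_eq -> _ -> _. Qed.

Lemma Dx_neq0 (R : realType) j w e : Dx R j w e != 0 -> exists k, e = pt j w k.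
Proof.
case: (eqVneq e (pt j w false)) => [->|H1]; first by exists false.
case: (eqVneq e (pt j w true)) => [->|H2]; first by exists true.
by rewrite /Dx (negbTE H1) (negbTE H2) /= !mul0r addr0 eqxx.
Qed.

Lemma Dx_pt_gt0 (R : realType) i w k : 0 < Dx R i w (pt i w k).
Proof.
have Hn : (pt i w true == pt i w false) = false by apply/negbTE/eqP; case.
have Hn' : (pt i w false == pt i w true) = false by rewrite eq_sym.
rewrite /Dx; case: k; rewrite ?Hn ?Hn' eqxx mul0r ?add0r ?addr0 divr_gt0 //.
Qed.

Lemma sp_factor (R : realType) th w (S : sample_space Z th) j m :
  sample_prob (fun j => Dx R j w) S != 0 -> Dx R j w (tnth (S j) m) != 0.
Proof. by move/prodf_neq0 => H; move: (H j isT) => /prodf_neq0; apply. Qed.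

Lemma pooled_in (th : 'I_2 -> nat) (S S' : sample_space Z th) j e :
  e \in (S j : seq Z) -> pooled S' = pooled S -> exists j' m', tnth (S' j') m' = e.
Proof.
move=> Hin HS.
have Hpos : pooled S' e != 0%N.
  rewrite HS /pooled ffunE; apply/eqP; rewrite (bigD1 j) //= => /eqP.
  by rewrite addn_eq0 => /andP[/eqP/count_memPn]; rewrite Hin.
case: (boolP [exists j', e \in (S' j' : seq Z)]) => [/existsP[j' Hj']|/existsPn Hn].
  by case/tnthP: Hj' => m ->; exists j', m.
move: Hpos; rewrite /pooled ffunE big1 ?eqxx // => j' _; apply/count_memPn; exact: Hn.
Qed.

Lemma Mx_true_kind0 (R : realType) th c i (x : X) :
  x.1.2 = false -> Mx R th c i (x, true) = 0.
Proof.
move=> Hx; rewrite /Mx big1 // => w _.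
suff -> : Dx R i w (x, true) = 0 by rewrite !mulr0.
apply/eqP; apply: contraT => /Dx_neq0 [k].
by rewrite /pt; case: k => -[Hx' Hl] //; rewrite Hx' in Hx.
Qed.

Lemma h_correct (R : realType) (th : 'I_2 -> nat) i j w (S : sample_space Z th) k :
  j != i -> (0 < th j)%N -> sample_prob (fun j => Dx R j w) S != 0 ->
  hx R th (pooled S) (pt i w k).1 = (pt i w k).2.
Proof.
move=> Hji Hth Hsp.
rewrite /hx (@owner_eq _ i) //.
case: k => /=; last first.
  by rewrite Mx_true_kind0 //; apply/negbTE; rewrite -leNgt Mx_ge0.
have Hz : forall w', own i w' != own i w -> Pc R th (pooled S) w' = 0.
  move=> w' Hw'; rewrite /Pc big1 // => S' /eqP HS'.
  pose e := tnth (S j) (Ordinal Hth).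
  have He : Dx R j w e != 0 by apply: sp_factor.
  case/Dx_neq0: He => k1 Hk1.
  have [j' [m' Hm']] := @pooled_in th S S' j _ (mem_tnth (Ordinal Hth) (S j)) HS'.
  apply/eqP; apply: contraT => Hsp'.
  have := sp_factor _ _ _ _ j' m' Hsp'; rewrite Hm' => /Dx_neq0 [k2 Hk2].
  case: (pt_inj _ _ _ _ _ _ (etrans (esym Hk1) Hk2)) => Hjj Ho'.
  rewrite -Hjj (oth_own _ _ w Hji) (oth_own _ _ w' Hji) in Ho'.
  by rewrite Ho' eqxx in Hw'.
have Hbad : Mx R th (pooled S) i ((pt i w true).1, ~~ own i w) = 0.
  rewrite /Mx big1 // => w' _.
  case: (eqVneq (Dx R i w' ((pt i w true).1, ~~ own i w)) 0) => [->|HD]; first by rewrite !mulr0.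
  case/Dx_neq0: HD => k3 Hk3.
  move: Hk3; rewrite /pt /=; case: k3 => -[_ Hl] //.
  rewrite Hz ?mul0r ?mulr0 //.
  by rewrite -Hl; case: (own i w).
have Hgood : 0 < Mx R th (pooled S) i ((pt i w true).1, own i w).
  apply: (lt_le_trans _ (@term_le_sum R _ xpredT _ w _ _)) => //; last first.
    by move=> w' _; rewrite mulr_ge0 ?prior_ge0 // mulr_ge0 ?Pc_ge0 ?Dx_ge0.
  rewrite mulr_gt0 // ?invr_gt0 ?ltr0n // mulr_gt0 //; last exact: (Dx_pt_gt0 R i w true).
  apply: (lt_le_trans _ (@term_le_sum R _ (fun S' => pooled S' == pooled S) _ S _ _)) => //.
    by rewrite lt0r Hsp sp_ge0.
  by move=> S' _; apply: sp_ge0.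
move: Hbad Hgood; case: (own i w) => /= -> H //.
by apply/negbTE; rewrite -leNgt ltW.
Qed.

Definition hh (R : realType) := fun th c => hx R th c.

Lemma err_ge0 (R : realType) i w (g : X -> bool) : 0 <= err (Dx R i w) g.
Proof. by rewrite /err sumr_ge0 // => z _; rewrite mulr_ge0 ?Dx_ge0 ?ler0n. Qed.

Lemma util_one (R : realType) (th : 'I_2 -> nat) i j :
  j != i -> (0 < th j)%N -> pac_utility (prior R) (Dx R) (hh R) i th = 1.
Proof.
move=> Hji Hth; rewrite /pac_utility big1 ?subr0 // => w _.
rewrite big1 ?mulr0 // => S _.
case: (eqVneq (sample_prob (fun j => Dx R j w) S) 0) => [->|Hsp]; first by rewrite mul0r.
rewrite /err big1 ?mulr0 // => z _.
case: (eqVneq (Dx R i w z) 0) => [->|Hz]; first by rewrite mul0r.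
case/Dx_neq0: Hz => k ->.
by rewrite /hh (@h_correct R th i j w S k Hji Hth Hsp) eqxx mulr0.
Qed.

Lemma util_lt1 (R : realType) (th : 'I_2 -> nat) i :
  (forall j, j != i -> th j = 0%N) -> pac_utility (prior R) (Dx R) (hh R) i th < 1.
Proof.
move=> H0.
pose e : Z := ((val i == 1%N, false, false), false).
pose S : sample_space Z th := finfun (fun j => [tuple of nseq (th j) e]).
pose v := hx R th (pooled S) (val i == 1%N, true, false).
pose w : W := if val i == 1%N then (false, ~~ v) else (~~ v, false).
have Hown : own i w = ~~ v by rewrite /own /w; case: (val i == 1%N).
have Hoth : oth i w = false by rewrite /oth /w; case: (val i == 1%N).
have He : e = pt i w false by rewrite /pt Hoth.
have Hsp : 0 < sample_prob (fun j => Dx R j w) S.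
  rewrite /sample_prob prodr_gt0 // => j _; rewrite prodr_gt0 // => m _.
  rewrite /S ffunE tnth_nseq.
  case: (eqVneq j i) => [->|Hj]; first by rewrite He Dx_pt_gt0.
  by have := ltn_ord m; move: (m : nat); rewrite H0.
have Herr : 0 < err (Dx R i w) (hh R th (pooled S)).
  apply: (lt_le_trans _ (@term_le_sum R _ xpredT _ (pt i w true) isT _)); last first.
    by move=> z _; rewrite mulr_ge0 ?Dx_ge0 ?ler0n.
  rewrite mulr_gt0 ?Dx_pt_gt0 //= /pt Hoth Hown /hh -/v.
  have -> : (v != ~~ v) = true by case: (v).
  by rewrite ltr01.
rewrite /pac_utility.
set T := (X in 1 - X).
suff : 0 < T by lra.
apply: (lt_le_trans _ (@term_le_sum R _ xpredT _ w isT _)); last first.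
  by move=> w' _; rewrite mulr_ge0 ?prior_ge0 // sumr_ge0 // => S' _; rewrite mulr_ge0 ?sp_ge0 ?err_ge0.
rewrite mulr_gt0 // ?invr_gt0 ?ltr0n //.
apply: (lt_le_trans _ (@term_le_sum R _ xpredT _ S isT _)); last first.
  by move=> S' _; rewrite mulr_ge0 ?sp_ge0 ?err_ge0.
by rewrite mulr_gt0.
Qed.

Lemma other_ex (i : 'I_2) : {j : 'I_2 | j != i}.
Proof.
case: i => [[|[|n]]] Hi; [exists ord_max | exists ord0 | by []]; by apply/eqP => /(congr1 val).
Qed.

Lemma only_other (i j k : 'I_2) : j != i -> k != i -> k = j.
Proof.
by case: i j k => [[|[|n]]] ? [[|[|n']]] ? [[|[|n'']]] ? //= _ _; apply/val_inj.
Qed.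

Theorem theorem3 (R : realType) :
  exists (k : nat) (X Y Omega : finType) (prior : Omega -> R)
         (D : 'I_k -> Omega -> (X * Y)%type -> R)
         (h : ('I_k -> nat) -> {ffun (X * Y)%type -> nat} -> X -> Y)
         (mu : 'I_k -> R),
    pac_setting prior D h /\
    (exists th, feasible_point (fun _ => True) (pac_utility prior D h) mu th) /\
    (forall th, ~ stable_equilibrium (fun _ => True) (pac_utility prior D h) mu th).
Proof.
exists 2%N, X, bool, W, (prior R), (Dx R), (hh R), (fun _ => 1).
split; first exact: setting.
split.
  exists (fun _ => 1%N); split => // i.
  have [j Hj] := other_ex i.
  by rewrite (@util_one R _ i j Hj).
move=> th [[_ Hf] Hst].
have Hpos : forall i : 'I_2, (0 < th i)%N.
  move=> i; have [j Hj] := other_ex i.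
  case: (posnP (th i)) => // Hz; exfalso.
  have := Hf j; rewrite leNgt (@util_lt1 R th j) //.
  move=> k Hk; rewrite -Hz; congr (th _).
  have Hij : i != j by rewrite eq_sym.
  exact: (only_other j i k Hij Hk).
have [j Hj] := other_ex ord0.
apply: (Hst ord0 0%N (Hpos ord0) I).
rewrite (@util_one R _ ord0 j Hj) //.
by rewrite /upd (negbTE Hj).
Qed.
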